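(* Let $|\nu|\le1$. For all $T>0$ and $\kappa>0$ there exist $\varepsilon_0>0$, $\gamma_0>0$ and $C>0$ such that \[ \|f\|^2_{L^2(H^\gamma)}=\int_0^T\int_{\mathbb{R}}|f(\tau,k)|^2(|k|^{2\gamma}+1)\,dk\,d\tau\le C\varepsilon^{1-\kappa} \] for all $\gamma\in(0,\gamma_0)$ and all $\varepsilon\in(0,\varepsilon_0)$.
   Context: Here $f=f^{(\varepsilon)}$ is the kernel $f(\tau,k)=e^{\tau\nu}\big[\chi_{(-1/\varepsilon,\infty)}(k)e^{-\tau(2+k\varepsilon)^2k^2}-e^{-4\tau k^2}\big]$ for $\tau\in[0,T]$, $k\in\mathbb{R}$ ($\chi_I$ the indicator of $I$); it is the Fourier symbol of the difference between the rescaled Swift–Hohenberg semigroup and the amplitude-equation semigroup $e^{\tau(4\partial_X^2+\nu)}$. *)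

(* Defs.v *)
From Stdlib Require Import Reals Lra ClassicalEpsilon.
Open Scope R_scope.

(* Total Riemann integral: the value of the Riemann integral of f on [a,b]
   when f is Riemann integrable there (unspecified otherwise; integrability
   is always asserted separately in the statement). *)
Definition RI (f : R -> R) (a b : R) : R :=
  epsilon (inhabits 0)
    (fun v => exists pr : Riemann_integrable f a b, RiemannInt pr = v).

Definition chi_eps (eps k : R) : R :=
  if Rlt_dec (- / eps) k then 1 else 0.

Definition fker (nu eps tau k : R) : R :=
  exp (tau * nu) *
  (chi_eps eps k * exp (- tau * ((2 + k * eps) ^ 2 * k ^ 2))
   - exp (- 4 * tau * k ^ 2)).

(* |k|^{p}, with the convention 0^p = 0 for p > 0 *)
Definition abspow (k p : R) : R :=
  if Req_EM_T k 0 then 0 else Rpower (Rabs k) p.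

Definition integrand (nu eps gam tau k : R) : R :=
  (Rabs (fker nu eps tau k)) ^ 2 * (abspow k (2 * gam) + 1).

(* Main.v *)
Require Import Defs.
From Stdlib Require Import Reals Lra Psatz ClassicalEpsilon FunctionalExtensionality.
From Coquelicot Require Import Coquelicot.
Open Scope R_scope.

Lemma exp_le x y : x <= y -> exp x <= exp y.
Proof. intros [H|H]; [left; now apply exp_increasing| subst; lra]. Qed.

Lemma ln_le x y : 0 < x -> x <= y -> ln x <= ln y.
Proof. intros Hx [H|H]; [left; now apply ln_increasing| subst; lra]. Qed.

Lemma RI_RInt f a b : ex_RInt f a b -> RI f a b = RInt f a b.
Proof.
  intros H. pose proof (ex_RInt_Reals_0 _ _ _ H) as pr.
  unfold RI.
  destruct (epsilon_spec (inhabits 0)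
    (fun v => exists pr : Riemann_integrable f a b, RiemannInt pr = v))
    as [pr' Hpr'].
  { exists (RiemannInt pr). now exists pr. }
  rewrite <- Hpr'. symmetry. apply RInt_Reals.
Qed.

Lemma cont_of_eps (f : R -> R) x :
  (forall e, e > 0 -> exists d, d > 0 /\ forall y, Rabs (y - x) < d -> Rabs (f y - f x) < e) ->
  continuous f x.
Proof.
  intros H. apply continuity_pt_filterlim.
  unfold continuity_pt, continue_in, limit1_in, limit_in.
  intros e He. destruct (H e He) as [d [Hd Hd']]. exists d; split; auto.
  intros y [_ Hy]. simpl in *. unfold R_dist in *. now apply Hd'.
Qed.

Lemma locally_pos (k : R) (P : R -> Prop) :
  0 < k -> (forall y, 0 < y -> P y) -> locally k P.
Proof.
  intros Hk HP. exists (mkposreal k Hk). intros y Hy.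
  apply HP. unfold ball in Hy; simpl in Hy; unfold AbsRing_ball, abs, minus, plus, opp in Hy; simpl in Hy.
  apply Rabs_lt_between' in Hy. lra.
Qed.

Lemma locally_neg (k : R) (P : R -> Prop) :
  k < 0 -> (forall y, y < 0 -> P y) -> locally k P.
Proof.
  intros Hk HP. assert (H: 0 < - k) by lra. exists (mkposreal (-k) H). intros y Hy.
  apply HP. unfold ball in Hy; simpl in Hy; unfold AbsRing_ball, abs, minus, plus, opp in Hy; simpl in Hy.
  apply Rabs_lt_between' in Hy. lra.
Qed.

Lemma abspow_cont a : 0 < a -> forall k, continuous (fun k => abspow k a) k.
Proof.
  intros Ha k.
  destruct (Rtotal_order k 0) as [Hk|[Hk|Hk]].
  - apply (continuous_ext_loc _ (fun y => exp (a * ln (- y)))).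
    + apply locally_neg; auto. intros y Hy. unfold abspow.
      destruct (Req_EM_T y 0); [lra|]. unfold Rpower. rewrite Rabs_left; auto.
    + apply (@ex_derive_continuous R_AbsRing R_NormedModule). auto_derive. lra.
  - subst. apply cont_of_eps. intros e He.
    exists (exp (ln e / a)). split; [apply exp_pos|].
    intros y Hy. unfold abspow at 2. destruct (Req_EM_T 0 0); [|lra].
    rewrite Rminus_0_r in *. unfold abspow.
    destruct (Req_EM_T y 0); [rewrite Rabs_R0; lra|].
    unfold Rpower. rewrite Rabs_pos_eq by (left; apply exp_pos).
    rewrite <- (exp_ln e) by lra. apply exp_increasing.
    assert (ln (Rabs y) < ln e / a).
    { rewrite <- (ln_exp (ln e / a)). apply ln_increasing; auto. now apply Rabs_pos_lt. }
    apply Rmult_lt_compat_l with (r := a) in H; auto.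
    replace (a * (ln e / a)) with (ln e) in H by (field; lra). lra.
  - apply (continuous_ext_loc _ (fun y => exp (a * ln y))).
    + apply locally_pos; auto. intros y Hy. unfold abspow.
      destruct (Req_EM_T y 0); [lra|]. unfold Rpower. rewrite Rabs_pos_eq; lra.
    + apply (@ex_derive_continuous R_AbsRing R_NormedModule). auto_derive. lra.
Qed.

Definition hc (c nu eps gam tau k : R) : R :=
  (Rabs (exp (tau * nu) * (c * exp (- tau * ((2 + k * eps) ^ 2 * k ^ 2))
   - exp (- 4 * tau * k ^ 2)))) ^ 2 * (abspow k (2 * gam) + 1).

Lemma hc_cont c nu eps gam tau k : 0 < gam -> continuous (hc c nu eps gam tau) k.
Proof.
  intros Hg. unfold hc.
  apply (continuous_mult
   (fun k => (Rabs (exp (tau * nu) * (c * exp (- tau * ((2 + k * eps) ^ 2 * k ^ 2))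
   - exp (- 4 * tau * k ^ 2)))) ^ 2) (fun k => abspow k (2 * gam) + 1)).
  - apply (continuous_ext (fun k => (exp (tau * nu) * (c * exp (- tau * ((2 + k * eps) ^ 2 * k ^ 2))
   - exp (- 4 * tau * k ^ 2))) ^ 2)).
    + intros; now rewrite pow2_abs.
    + apply (@ex_derive_continuous R_AbsRing R_NormedModule). auto_derive. auto.
  - apply (continuous_plus (fun k => abspow k (2 * gam)) (fun _ => 1)).
    + apply abspow_cont. lra.
    + apply continuous_const.
Qed.

Lemma integrand_ex nu eps gam tau M : 0 < eps -> 0 < gam -> 0 < M ->
  ex_RInt (integrand nu eps gam tau) (- M) M.
Proof.
  intros He Hg HM.
  assert (E1 : forall k, - / eps < k -> integrand nu eps gam tau k = hc 1 nu eps gam tau k).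
  { intros k Hk. unfold integrand, hc, fker, chi_eps. destruct (Rlt_dec (- / eps) k); [auto|lra]. }
  assert (E0 : forall k, k < - / eps -> integrand nu eps gam tau k = hc 0 nu eps gam tau k).
  { intros k Hk. unfold integrand, hc, fker, chi_eps. destruct (Rlt_dec (- / eps) k); [lra|auto]. }
  assert (X : forall c a b, ex_RInt (hc c nu eps gam tau) a b).
  { intros c a b. apply (@ex_RInt_continuous R_CompleteNormedModule). intros; now apply hc_cont. }
  destruct (Rle_or_lt (- / eps) (- M)) as [H1|H1].
  - apply (ex_RInt_ext (hc 1 nu eps gam tau)); auto.
    intros x Hx. rewrite Rmin_left in Hx by lra. symmetry; apply E1. lra.
  - destruct (Rle_or_lt M (- / eps)) as [H2|H2].
    + apply (ex_RInt_ext (hc 0 nu eps gam tau)); auto.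
      intros x Hx. rewrite Rmax_right in Hx by lra. symmetry; apply E0. lra.
    + apply ex_RInt_Chasles with (- / eps).
      * apply (ex_RInt_ext (hc 0 nu eps gam tau)); auto.
        intros x Hx. rewrite Rmax_right in Hx by lra. symmetry; apply E0. lra.
      * apply (ex_RInt_ext (hc 1 nu eps gam tau)); auto.
        intros x Hx. rewrite Rmin_left in Hx by lra. symmetry; apply E1. lra.
Qed.

Lemma exp_sub1_le t : 0 <= t -> exp t - 1 <= t * exp t.
Proof.
  intros Ht. pose proof (exp_ineq1_le (- t)).
  assert (exp (-t) * exp t = 1) by (rewrite <- exp_plus; replace (-t+t) with 0 by ring; apply exp_0).
  pose proof (exp_pos t). nra.
Qed.

Lemma exp_lip x y X : Rabs x <= X -> Rabs y <= X -> Rabs (exp x - exp y) <= exp X * Rabs (x - y).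
Proof.
  intros Hx Hy.
  assert (G : forall u v, u <= v -> Rabs v <= X -> exp v - exp u <= exp X * (v - u)).
  { intros u v Huv Hv. pose proof (exp_sub1_le (v - u) ltac:(lra)).
    assert (exp u * exp (v - u) = exp v) by (rewrite <- exp_plus; f_equal; ring).
    assert (exp v <= exp X) by (apply exp_le; apply Rabs_le_between in Hv; lra).
    pose proof (exp_pos u). nra. }
  destruct (Rle_or_lt x y) as [H|H].
  - rewrite Rabs_left1 by (pose proof (exp_le _ _ H); lra).
    rewrite (Rabs_left1 (x - y)) by lra. specialize (G x y H Hy). lra.
  - rewrite Rabs_pos_eq by (pose proof (exp_increasing _ _ H); lra).
    rewrite (Rabs_pos_eq (x - y)) by lra. specialize (G y x ltac:(lra) Hx). lra.
Qed.

Lemma abs_mul_le a b A B : Rabs a <= A -> Rabs b <= B -> Rabs (a * b) <= A * B.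
Proof. intros. rewrite Rabs_mult. apply Rmult_le_compat; auto; apply Rabs_pos. Qed.

Lemma G_lip (chi c d t t0 Rr Cm : R) : 0 <= chi <= 1 -> Rabs c <= Cm -> Rabs d <= Cm ->
  Rabs t <= Rr -> Rabs t0 <= Rr ->
  Rabs ((chi * exp (t * c) - exp (t * d)) - (chi * exp (t0 * c) - exp (t0 * d)))
   <= 2 * exp (Rr * Cm) * Cm * Rabs (t - t0).
Proof.
  intros Hchi Hc Hd Ht Ht0.
  assert (Hcm : 0 <= Cm) by (pose proof (Rabs_pos c); lra).
  assert (Hr : 0 <= Rr) by (pose proof (Rabs_pos t); lra).
  assert (B : forall e, Rabs e <= Cm -> Rabs (exp (t * e) - exp (t0 * e)) <= exp (Rr * Cm) * (Cm * Rabs (t - t0))).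
  { intros e He. eapply Rle_trans. apply exp_lip.
    - apply abs_mul_le; eauto.
    - apply abs_mul_le; eauto.
    - rewrite (Rmult_comm Rr Cm). apply Rmult_le_compat_l. left; apply exp_pos.
      replace (t * e - t0 * e) with (e * (t - t0)) by ring. rewrite Rabs_mult.
      apply Rmult_le_compat_r; auto. apply Rabs_pos. }
  pose proof (B c Hc) as Bc. pose proof (B d Hd) as Bd.
  replace ((chi * exp (t * c) - exp (t * d)) - (chi * exp (t0 * c) - exp (t0 * d)))
    with (chi * (exp (t * c) - exp (t0 * c)) - (exp (t * d) - exp (t0 * d))) by ring.
  eapply Rle_trans. apply Rabs_triang. rewrite Rabs_Ropp, Rabs_mult.
  rewrite (Rabs_pos_eq chi) by lra.
  assert (0 <= Rabs (exp (t * c) - exp (t0 * c))) by apply Rabs_pos.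
  nra.
Qed.

Lemma G_bound (chi c d t Rr Cm : R) : 0 <= chi <= 1 -> Rabs c <= Cm -> Rabs d <= Cm ->
  Rabs t <= Rr -> Rabs (chi * exp (t * c) - exp (t * d)) <= 2 * exp (Rr * Cm).
Proof.
  intros Hchi Hc Hd Ht.
  assert (Hcm : 0 <= Cm) by (pose proof (Rabs_pos c); lra).
  assert (B : forall e, Rabs e <= Cm -> exp (t * e) <= exp (Rr * Cm)).
  { intros e He. apply exp_le. eapply Rle_trans. apply Rle_abs.
    apply abs_mul_le; auto. }
  pose proof (B c Hc). pose proof (B d Hd). pose proof (exp_pos (t*c)). pose proof (exp_pos (t*d)).
  apply Rabs_le. nra.
Qed.

Lemma sq_lip (F F0 A D : R) : Rabs F <= A -> Rabs F0 <= A -> Rabs (F - F0) <= D ->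
  Rabs (F ^ 2 - F0 ^ 2) <= 2 * A * D.
Proof.
  intros HF HF0 HD. replace (F ^ 2 - F0 ^ 2) with ((F - F0) * (F + F0)) by ring.
  rewrite Rabs_mult. pose proof (Rabs_triang F F0). pose proof (Rabs_pos (F - F0)).
  pose proof (Rabs_pos (F + F0)). nra.
Qed.

Lemma fker_eq nu eps t k : fker nu eps t k =
  chi_eps eps k * exp (t * (nu - (2 + k * eps) ^ 2 * k ^ 2)) - exp (t * (nu - 4 * k ^ 2)).
Proof.
  unfold fker.
  replace (t * (nu - (2 + k * eps) ^ 2 * k ^ 2)) with (t * nu + - t * ((2 + k * eps) ^ 2 * k ^ 2)) by ring.
  replace (t * (nu - 4 * k ^ 2)) with (t * nu + - 4 * t * k ^ 2) by ring.
  rewrite !exp_plus. ring.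
Qed.

Lemma chi_range eps k : 0 <= chi_eps eps k <= 1.
Proof. unfold chi_eps. destruct (Rlt_dec _ _); lra. Qed.

Lemma abspow_nonneg k a : 0 <= abspow k a.
Proof. unfold abspow. destruct (Req_EM_T k 0). lra. unfold Rpower. left; apply exp_pos. Qed.

Lemma abspow_le k a M : 0 <= a -> Rabs k <= M -> abspow k a <= exp (a * ln M).
Proof.
  intros Ha Hk. unfold abspow. destruct (Req_EM_T k 0). left; apply exp_pos.
  unfold Rpower. apply exp_le. apply Rmult_le_compat_l; auto. apply ln_le; auto.
  now apply Rabs_pos_lt.
Qed.

Definition Cm (M eps : R) := 1 + (2 + M * eps) ^ 2 * M ^ 2 + 4 * M ^ 2.
Definition Wb (gam M : R) := exp (2 * gam * ln M) + 1.

Lemma integrand_lip nu eps gam M k t t0 Rr : Rabs nu <= 1 -> 0 < eps -> 0 < gam -> 0 < M ->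
  Rabs k <= M -> Rabs t <= Rr -> Rabs t0 <= Rr ->
  Rabs (integrand nu eps gam t k - integrand nu eps gam t0 k) <=
  (2 * (2 * exp (Rr * Cm M eps)) * (2 * exp (Rr * Cm M eps) * Cm M eps) * Wb gam M) * Rabs (t - t0).
Proof.
  intros Hnu He Hg HM Hk Ht Ht0.
  assert (Hk2 : k ^ 2 <= M ^ 2) by (rewrite <- (pow2_abs k); apply pow_incr; split; [apply Rabs_pos|auto]).
  assert (Ha : (2 + k * eps) ^ 2 <= (2 + M * eps) ^ 2).
  { rewrite <- (pow2_abs (2 + k * eps)). apply pow_incr; split; [apply Rabs_pos|].
    apply Rabs_le. apply Rabs_le_between in Hk. nra. }
  assert (Hc : Rabs (nu - (2 + k * eps) ^ 2 * k ^ 2) <= Cm M eps).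
  { unfold Cm. eapply Rle_trans. apply Rabs_triang. rewrite Rabs_Ropp.
    rewrite (Rabs_pos_eq (_ * _)) by (apply Rmult_le_pos; apply pow2_ge_0).
    assert ((2 + k * eps) ^ 2 * k ^ 2 <= (2 + M * eps) ^ 2 * M ^ 2)
      by (apply Rmult_le_compat; auto; apply pow2_ge_0).
    pose proof (pow2_ge_0 M). lra. }
  assert (Hd : Rabs (nu - 4 * k ^ 2) <= Cm M eps).
  { unfold Cm. eapply Rle_trans. apply Rabs_triang. rewrite Rabs_Ropp.
    rewrite (Rabs_pos_eq (4 * _)) by (pose proof (pow2_ge_0 k); lra).
    pose proof (pow2_ge_0 ((2 + M * eps) ^ 2 * M ^ 2)).
    assert (0 <= (2 + M * eps) ^ 2 * M ^ 2) by (apply Rmult_le_pos; apply pow2_ge_0). lra. }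
  unfold integrand. rewrite !pow2_abs, !fker_eq.
  set (F := chi_eps eps k * exp (t * (nu - (2 + k * eps) ^ 2 * k ^ 2)) - exp (t * (nu - 4 * k ^ 2))).
  set (F0 := chi_eps eps k * exp (t0 * (nu - (2 + k * eps) ^ 2 * k ^ 2)) - exp (t0 * (nu - 4 * k ^ 2))).
  replace (F ^ 2 * (abspow k (2 * gam) + 1) - F0 ^ 2 * (abspow k (2 * gam) + 1))
    with ((F ^ 2 - F0 ^ 2) * (abspow k (2 * gam) + 1)) by ring.
  rewrite Rabs_mult. rewrite (Rabs_pos_eq (abspow _ _ + 1)) by (pose proof (abspow_nonneg k (2*gam)); lra).
  assert (HW : abspow k (2 * gam) + 1 <= Wb gam M).
  { unfold Wb. pose proof (abspow_le k (2*gam) M ltac:(lra) Hk). lra. }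
  assert (HL : Rabs (F ^ 2 - F0 ^ 2) <= 2 * (2 * exp (Rr * Cm M eps)) * (2 * exp (Rr * Cm M eps) * Cm M eps * Rabs (t - t0))).
  { apply sq_lip.
    - eapply G_bound; eauto using chi_range.
    - eapply G_bound; eauto using chi_range.
    - eapply G_lip; eauto using chi_range. }
  pose proof (abspow_nonneg k (2*gam)). pose proof (Rabs_pos (F ^ 2 - F0 ^ 2)).
  assert (0 <= Rabs (t - t0)) by apply Rabs_pos.
  assert (0 <= 2 * (2 * exp (Rr * Cm M eps)) * (2 * exp (Rr * Cm M eps) * Cm M eps * Rabs (t - t0))) by lra.
  replace (2 * (2 * exp (Rr * Cm M eps)) * (2 * exp (Rr * Cm M eps) * Cm M eps) * Wb gam M * Rabs (t - t0))
    with (2 * (2 * exp (Rr * Cm M eps)) * (2 * exp (Rr * Cm M eps) * Cm M eps * Rabs (t - t0)) * Wb gam M) by ring.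
  apply Rmult_le_compat; lra.
Qed.

Lemma RInt_bound_const (f : R -> R) a b c : a <= b -> ex_RInt f a b ->
  (forall x, a < x < b -> Rabs (f x) <= c) -> Rabs (RInt f a b) <= (b - a) * c.
Proof.
  intros Hab Hf Hc.
  assert (E : forall c', RInt (fun _ => c') a b = (b - a) * c').
  { intros c'. rewrite RInt_const. reflexivity. }
  assert (H1 : RInt f a b <= RInt (fun _ => c) a b).
  { apply RInt_le; auto. apply ex_RInt_const. intros x Hx. specialize (Hc x Hx). apply Rabs_le_between in Hc. lra. }
  assert (H2 : RInt (fun _ => - c) a b <= RInt f a b).
  { apply RInt_le; auto. apply ex_RInt_const. intros x Hx. specialize (Hc x Hx). apply Rabs_le_between in Hc. lra. }
  rewrite E in H1, H2. apply Rabs_le. lra.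
Qed.

Lemma I_cont nu eps gam M t0 : Rabs nu <= 1 -> 0 < eps -> 0 < gam -> 0 < M ->
  continuous (fun t => RInt (integrand nu eps gam t) (- M) M) t0.
Proof.
  intros Hnu He Hg HM. apply cont_of_eps. intros e Hepos.
  set (Rr := Rabs t0 + 1).
  set (L := 2 * (2 * exp (Rr * Cm M eps)) * (2 * exp (Rr * Cm M eps) * Cm M eps) * Wb gam M).
  assert (HL : 0 <= L).
  { unfold L, Wb, Cm. pose proof (exp_pos (Rr * (1 + (2 + M * eps) ^ 2 * M ^ 2 + 4 * M ^ 2))).
    pose proof (exp_pos (2 * gam * ln M)). pose proof (pow2_ge_0 (2 + M * eps)). pose proof (pow2_ge_0 M).
    assert (0 <= (2 + M * eps) ^ 2 * M ^ 2) by (apply Rmult_le_pos; auto).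
    apply Rmult_le_pos; [|lra]. apply Rmult_le_pos; [lra|]. apply Rmult_le_pos; lra. }
  set (K := 2 * M * L + 1).
  assert (HK : 0 < K) by (unfold K; nra).
  exists (Rmin 1 (e / K)). split.
  { apply Rmin_pos; [lra|]. apply Rdiv_lt_0_compat; auto. }
  intros t Ht.
  assert (Ht1 : Rabs (t - t0) < 1) by (eapply Rlt_le_trans; [apply Ht| apply Rmin_l]).
  assert (Ht2 : Rabs (t - t0) < e / K) by (eapply Rlt_le_trans; [apply Ht| apply Rmin_r]).
  assert (Hex := fun s => integrand_ex nu eps gam s M He Hg HM).
  assert (Eq : RInt (integrand nu eps gam t) (- M) M - RInt (integrand nu eps gam t0) (- M) M
     = RInt (fun k => integrand nu eps gam t k - integrand nu eps gam t0 k) (- M) M).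
  { symmetry. apply (RInt_minus (V := R_CompleteNormedModule)); auto. }
  rewrite Eq.
  eapply Rle_lt_trans. apply RInt_bound_const with (c := L * Rabs (t - t0)).
  - lra.
  - apply (ex_RInt_minus (V := R_NormedModule)); auto.
  - intros k Hk. apply integrand_lip; auto.
    + apply Rabs_le. lra.
    + unfold Rr. apply Rabs_lt_between' in Ht1. apply Rabs_le. pose proof (Rle_abs t0). pose proof (Rle_abs (- t0)). rewrite Rabs_Ropp in *.  lra.
    + unfold Rr. lra.
  - replace (M - - M) with (2 * M) by ring.
    assert (2 * M * (L * Rabs (t - t0)) <= (K - 1) * Rabs (t - t0)) by (unfold K; right; ring).
    assert ((K - 1) * Rabs (t - t0) < K * (e / K)).
    { pose proof (Rabs_pos (t - t0)). nra. }
    replace (K * (e / K)) with e in * by (field; lra). lra.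
Qed.

Lemma exp_sq x : exp x ^ 2 = exp (2 * x).
Proof. replace (2 * x) with (x + x) by ring. rewrite exp_plus. ring. Qed.

Lemma sq_diff_le u v m : 0 <= u <= m -> 0 <= v <= m -> (u - v) ^ 2 <= m ^ 2.
Proof. intros. nra. Qed.

Lemma chi_one eps k : 0 < eps -> - / eps < k -> chi_eps eps k = 1 /\ - 1 < k * eps.
Proof.
  intros He Hk. unfold chi_eps. destruct (Rlt_dec _ _); [|lra]. split; auto.
  apply Rmult_lt_compat_r with (r := eps) in Hk; auto.
  replace (- / eps * eps) with (-1) in Hk by (field; lra). lra.
Qed.

Lemma fker_tail nu eps tau k T : Rabs nu <= 1 -> 0 < eps -> 0 <= tau <= T ->
  fker nu eps tau k ^ 2 <= exp (2 * T) * exp (- 2 * tau * k ^ 2).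
Proof.
  intros Hnu He Ht. unfold fker. rewrite Rpow_mult_distr, exp_sq.
  apply Rmult_le_compat.
  - left; apply exp_pos.
  - apply pow2_ge_0.
  - apply exp_le. apply Rabs_le_between in Hnu. nra.
  - replace (exp (- 2 * tau * k ^ 2)) with (exp (- tau * k ^ 2) ^ 2)
      by (rewrite exp_sq; f_equal; ring).
    apply sq_diff_le.
    + split. apply Rmult_le_pos. apply chi_range. left; apply exp_pos.
      unfold chi_eps. destruct (Rlt_dec _ _).
      * rewrite Rmult_1_l. apply exp_le.
        destruct (chi_one eps k He r) as [_ Hk].
        assert (1 <= (2 + k * eps) ^ 2) by (assert (0 < (1 + k*eps)*(3+k*eps)) by (apply Rmult_lt_0_compat; lra); assert ((2+k*eps)^2 = 1 + (1+k*eps)*(3+k*eps)) by ring; lra). pose proof (pow2_ge_0 k). assert (0 <= tau * (k^2 * ((2+k*eps)^2 - 1))) by (apply Rmult_le_pos; [lra| apply Rmult_le_pos; lra]). lra.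
      * rewrite Rmult_0_l. left; apply exp_pos.
    + split. left; apply exp_pos. apply exp_le. pose proof (pow2_ge_0 k). nra.
Qed.

Lemma expdiff x y m : 0 <= m -> m <= x -> m <= y -> Rabs (exp (- x) - exp (- y)) <= Rabs (x - y) * exp (- m).
Proof.
  intros Hm Hx Hy.
  assert (G : forall u v, m <= u -> u <= v -> exp (- u) - exp (- v) <= (v - u) * exp (- m)).
  { intros u v Hu Huv. pose proof (exp_ineq1_le (- (v - u))).
    assert (exp (- u) * exp (- (v - u)) = exp (- v)) by (rewrite <- exp_plus; f_equal; ring).
    assert (exp (- u) <= exp (- m)) by (apply exp_le; lra).
    pose proof (exp_pos (- u)). nra. }
  destruct (Rle_or_lt x y) as [H|H].
  - rewrite Rabs_pos_eq by (assert (exp (- y) <= exp (- x)) by (apply exp_le; lra); lra).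
    rewrite Rabs_left1 by lra. specialize (G x y Hx H). lra.
  - rewrite Rabs_left1 by (assert (exp (- x) <= exp (- y)) by (apply exp_le; lra); lra).
    rewrite Rabs_pos_eq by lra. specialize (G y x Hy ltac:(lra)). lra.
Qed.

Lemma fker_mid nu eps tau k T : Rabs nu <= 1 -> 0 < eps -> 0 <= tau <= T ->
  - / eps < k -> Rabs k * eps <= 1 ->
  fker nu eps tau k ^ 2 <= 25 * exp (2 * T) * (eps ^ 2 * tau ^ 2 * k ^ 6 * exp (- 2 * tau * k ^ 2)).
Proof.
  intros Hnu He Ht Hk Hke. destruct (chi_one eps k He Hk) as [Hc Hk1].
  unfold fker. rewrite Hc, Rmult_1_l, Rpow_mult_distr, exp_sq.
  set (a := (2 + k * eps) ^ 2 * k ^ 2).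
  assert (Ha : k ^ 2 <= a) by (unfold a; assert (1 <= (2 + k * eps) ^ 2) by nra; pose proof (pow2_ge_0 k); nra).
  assert (D := expdiff (tau * a) (4 * tau * k ^ 2) (tau * k ^ 2) ltac:(pose proof (pow2_ge_0 k); nra)
     ltac:(nra) ltac:(pose proof (pow2_ge_0 k); nra)).
  replace (- tau * a) with (- (tau * a)) by ring.
  replace (- 4 * tau * k ^ 2) with (- (4 * tau * k ^ 2)) by ring.
  assert (Hab : Rabs (tau * a - 4 * tau * k ^ 2) <= tau * (5 * eps * Rabs k ^ 3)).
  { replace (tau * a - 4 * tau * k ^ 2) with (tau * (k ^ 2 * (k * eps) * (4 + k * eps))) by (unfold a; ring).
    rewrite Rabs_mult, (Rabs_pos_eq tau) by lra. apply Rmult_le_compat_l; [lra|].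
    rewrite !Rabs_mult. rewrite <- (pow2_abs k).
    rewrite (Rabs_pos_eq (Rabs k ^ 2)) by apply pow2_ge_0.
    assert (Rabs (4 + k * eps) <= 5).
    { apply Rabs_le. assert (Rabs (k * eps) <= 1) by (rewrite Rabs_mult, (Rabs_pos_eq eps); lra).
      apply Rabs_le_between in H. lra. }
    rewrite (Rabs_pos_eq eps) by lra.
    pose proof (Rabs_pos k). pose proof (Rabs_pos (4 + k * eps)).
    assert (0 <= Rabs k ^ 2 * (Rabs k * eps)) by (apply Rmult_le_pos; [apply pow2_ge_0|nra]).
    replace (5 * eps * Rabs k ^ 3) with (Rabs k ^ 2 * (Rabs k * eps) * 5) by ring.
    apply Rmult_le_compat_l; auto. }
  match goal with |- _ <= 25 * exp (2 * T) * ?X => replace (25 * exp (2 * T) * X) with (exp (2 * T) * (25 * X)) by ring end.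
  assert (Hd : Rabs (exp (- (tau * a)) - exp (- (4 * tau * k ^ 2))) <= tau * (5 * eps * Rabs k ^ 3) * exp (- (tau * k ^ 2))).
  { eapply Rle_trans; [apply D|]. apply Rmult_le_compat_r; [left; apply exp_pos|auto]. }
  apply Rmult_le_compat.
  - left; apply exp_pos.
  - apply pow2_ge_0.
  - apply exp_le. apply Rabs_le_between in Hnu. nra.
  - rewrite <- pow2_abs.
    assert (0 <= tau * (5 * eps * Rabs k ^ 3) * exp (- (tau * k ^ 2)))
      by (pose proof (Rabs_pos k); pose proof (exp_pos (- (tau * k ^ 2))); apply Rmult_le_pos; [|lra]; apply Rmult_le_pos; [lra|]; apply Rmult_le_pos; [lra|]; apply pow_le; auto).
    eapply Rle_trans. apply pow_incr. split; [apply Rabs_pos| apply Hd].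
    replace (exp (- 2 * tau * k ^ 2)) with (exp (- (tau * k ^ 2)) ^ 2) by (rewrite exp_sq; f_equal; ring).
    replace (k ^ 6) with ((k ^ 2) ^ 3) by ring. rewrite <- (pow2_abs k). right. ring.
Qed.

Lemma ln_lt_x x : 0 < x -> ln x < x.
Proof.
  intros Hx. rewrite <- (ln_exp x) at 2. apply ln_increasing; auto.
  pose proof (exp_ineq1_le x). lra.
Qed.

Lemma decay1 x b : 0 < x -> 0 <= b <= 1 -> exp (- 2 * x) <= exp (- b * ln x).
Proof.
  intros Hx Hb. apply exp_le. pose proof (ln_lt_x x Hx).
  destruct (Rle_or_lt (ln x) 0); nra.
Qed.

Lemma pow_exp_le x b : 0 < x -> 0 <= b <= 1 -> exp (b * ln x) <= 1 + x.
Proof.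
  intros Hx Hb. destruct (Rle_or_lt (ln x) 0).
  - assert (exp (b * ln x) <= exp 0) by (apply exp_le; nra). rewrite exp_0 in H0. lra.
  - assert (exp (b * ln x) <= exp (ln x)) by (apply exp_le; nra). rewrite exp_ln in H0; lra.
Qed.

Lemma decay2 x b : 0 < x -> 0 <= b <= 1 -> x ^ 2 * exp (- 2 * x) <= 2 * exp (- b * ln x).
Proof.
  intros Hx Hb.
  pose proof (pow_exp_le x b Hx Hb) as H1.
  assert (H2 : (1 + x / 2) ^ 4 <= exp (2 * x)).
  { replace (2 * x) with (2 * (2 * (x / 2))) by field. rewrite <- !exp_sq.
    replace ((exp (x / 2) ^ 2) ^ 2) with (exp (x/2) ^ 4) by ring.
    apply pow_incr. pose proof (exp_ineq1_le (x / 2)). lra. }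
  assert (H3 : x ^ 2 * exp (b * ln x) <= 2 * exp (2 * x)).
  { assert (x ^ 2 * exp (b * ln x) <= x ^ 2 * (1 + x)) by (apply Rmult_le_compat_l; [apply pow2_ge_0|auto]).
    assert (x ^ 2 * (1 + x) <= 2 * (1 + x / 2) ^ 4) by nra. lra. }
  assert (EE : exp (b * ln x) * exp (- b * ln x) = 1) by (rewrite <- exp_plus; replace (b * ln x + - b * ln x) with 0 by ring; apply exp_0).
  assert (GG : exp (2 * x) * exp (- 2 * x) = 1) by (rewrite <- exp_plus; replace (2 * x + - 2 * x) with 0 by ring; apply exp_0).
  assert (P : 0 < exp (- b * ln x) * exp (- 2 * x)) by (apply Rmult_lt_0_compat; apply exp_pos).
  apply Rmult_le_compat_r with (r := exp (- b * ln x) * exp (- 2 * x)) in H3; [|lra].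
  replace (x ^ 2 * exp (b * ln x) * (exp (- b * ln x) * exp (- 2 * x))) with (x ^ 2 * exp (- 2 * x) * (exp (b * ln x) * exp (- b * ln x))) in H3 by ring.
  replace (2 * exp (2 * x) * (exp (- b * ln x) * exp (- 2 * x))) with (2 * exp (- b * ln x) * (exp (2 * x) * exp (- 2 * x))) in H3 by ring.
  rewrite EE, GG in H3. lra.
Qed.

Lemma shift tau d k : 2 * d * k ^ 2 <= 1 ->
  exp (- 2 * tau * k ^ 2) <= exp 1 * exp (- 2 * (tau + d) * k ^ 2).
Proof.
  intros H. replace (- 2 * tau * k ^ 2) with (2 * d * k ^ 2 + - 2 * (tau + d) * k ^ 2) by ring.
  rewrite exp_plus. apply Rmult_le_compat_r. left; apply exp_pos. now apply exp_le.
Qed.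
Ltac nra' := repeat match goal with H := _ |- _ => clearbody H end; nra.

Lemma exp_2ln2 : exp (2 * ln 2) = 4.
Proof. rewrite <- exp_sq, exp_ln by lra. ring. Qed.

Lemma ln2_pos : 0 < ln 2.
Proof. rewrite <- ln_1. apply ln_increasing; lra. Qed.

Lemma pointwise nu eps gam bt T tau d k :
  Rabs nu <= 1 -> 0 < eps < 1 -> 0 < gam -> 3/4 <= bt <= 1 -> 2 * bt - 2 * gam >= 0 ->
  0 <= tau <= T -> 0 < d -> 2 * d * k ^ 2 <= 1 ->
  integrand nu eps gam tau k <=
  400 * exp (2 * T + 1) * (exp (- bt * ln (tau + d)) *
    (exp ((2 * bt - 2 * gam) * ln eps) * exp (- (2 * bt - 2 * gam) * ln (1 + eps * Rabs k)))).
Proof.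
  intros Hnu He Hg Hb Hp Ht Hd Hdk.
  set (p := 2 * bt - 2 * gam).
  set (s := tau + d).
  assert (Hs : 0 < s) by (unfold s; lra).
  set (Sv := exp (- bt * ln s)).
  set (E := exp (p * ln eps)).
  set (G := exp (- p * ln (1 + eps * Rabs k))).
  assert (HS : 0 < Sv) by apply exp_pos. assert (HE : 0 < E) by apply exp_pos. assert (HG : 0 < G) by apply exp_pos.
  assert (Hex : exp (2 * T + 1) = exp (2 * T) * exp 1) by apply exp_plus.
  assert (HeT : 0 < exp (2 * T)) by apply exp_pos. assert (He1 : 0 < exp 1) by apply exp_pos.
  assert (Hle : ln eps < 0) by (rewrite <- ln_1; apply ln_increasing; lra).
  assert (Hp2 : p <= 2) by (unfold p; lra). assert (Hp0 : 0 <= p) by (unfold p; lra).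
  destruct (Req_EM_T k 0) as [Hk0|Hk0].
  - subst k. unfold integrand, fker, chi_eps.
    destruct (Rlt_dec (- / eps) 0) as [_|HH].
    2: { exfalso. apply HH. assert (0 < / eps) by (apply Rinv_0_lt_compat; lra). lra. }
    replace (- tau * ((2 + 0 * eps) ^ 2 * 0 ^ 2)) with 0 by ring.
    replace (- 4 * tau * 0 ^ 2) with 0 by ring.
    replace (1 * exp 0 - exp 0) with 0 by ring. rewrite Rmult_0_r, Rabs_R0.
    replace (0 ^ 2) with 0 by ring. rewrite Rmult_0_l.
    fold p s Sv E. assert (0 < exp (2 * T + 1)) by apply exp_pos.
    assert (0 < Sv * (E * G)) by (apply Rmult_lt_0_compat; auto; apply Rmult_lt_0_compat; auto).
    unfold G in *. nra'.
  - assert (Hk : 0 < Rabs k) by now apply Rabs_pos_lt.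
    set (Lk := ln (Rabs k)).
    assert (Hk2 : k ^ 2 = exp (2 * Lk)) by (unfold Lk; rewrite <- exp_sq, exp_ln by auto; now rewrite pow2_abs).
    set (x := s * k ^ 2).
    assert (Hx : 0 < x) by (unfold x; rewrite Hk2; apply Rmult_lt_0_compat; auto; apply exp_pos).
    assert (Hlnx : ln x = ln s + 2 * Lk) by (unfold x; rewrite Hk2, ln_mult, ln_exp; auto; apply exp_pos).
    assert (HSx : exp (- bt * ln x) = Sv * exp (- 2 * bt * Lk)).
    { rewrite Hlnx. unfold Sv. rewrite <- exp_plus. f_equal. ring. }
    assert (Hw : integrand nu eps gam tau k = fker nu eps tau k ^ 2 * (exp (2 * gam * Lk) + 1)).
    { unfold integrand, abspow. rewrite pow2_abs. destruct (Req_EM_T k 0); [contradiction|]. reflexivity. }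
    rewrite Hw.
    assert (Hw0 : 0 <= exp (2 * gam * Lk) + 1) by (pose proof (exp_pos (2 * gam * Lk)); lra).
    assert (Hsh : exp (- 2 * tau * k ^ 2) <= exp 1 * exp (- 2 * x)).
    { unfold x, s. replace (- 2 * ((tau + d) * k ^ 2)) with (- 2 * (tau + d) * k ^ 2) by ring. now apply shift. }
    destruct (Rle_or_lt 1 (Rabs k * eps)) as [HA|HB].
    +
      assert (HLk : - ln eps <= Lk).
      { unfold Lk. rewrite <- ln_Rinv by lra. apply ln_le. apply Rinv_0_lt_compat; lra.
        apply Rmult_le_reg_r with eps; [lra|]. rewrite Rinv_l by lra. lra. }
      assert (F1 : fker nu eps tau k ^ 2 <= exp (2 * T + 1) * (Sv * exp (- 2 * bt * Lk))).
      { eapply Rle_trans. eapply fker_tail; eauto; lra.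
        rewrite Hex, <- HSx. pose proof (decay1 x bt Hx ltac:(lra)).
        pose proof (exp_pos (- 2 * x)). rewrite (Rmult_assoc (exp (2 * T)) (exp 1)). apply Rmult_le_compat_l; [lra|]. eapply Rle_trans; [apply Hsh|]. apply Rmult_le_compat_l; lra. }
      assert (W1 : exp (2 * gam * Lk) + 1 <= 2 * exp (2 * gam * Lk)).
      { assert (exp 0 <= exp (2 * gam * Lk)) by (apply exp_le; nra'). rewrite exp_0 in H. lra. }
      assert (K1 : exp (- 2 * bt * Lk) * exp (2 * gam * Lk) = exp (- p * Lk))
        by (rewrite <- exp_plus; f_equal; unfold p; ring).
      assert (K2 : exp (- p * Lk) <= 4 * (E * G)).
      { unfold E, G. rewrite <- exp_2ln2, <- !exp_plus. apply exp_le.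
        assert (ln (1 + eps * Rabs k) <= ln 2 + ln eps + Lk).
        { unfold Lk. rewrite <- !ln_mult by lra. apply ln_le. nra'. nra'. }
        pose proof ln2_pos. nra'. }
      assert (0 < exp (- 2 * bt * Lk)) by apply exp_pos.
      assert (0 < exp (2 * gam * Lk)) by apply exp_pos.
      assert (0 < exp (2 * T + 1)) by apply exp_pos.
      eapply Rle_trans. apply Rmult_le_compat; [apply pow2_ge_0|lra|apply F1|apply W1].
      replace (exp (2 * T + 1) * (Sv * exp (- 2 * bt * Lk)) * (2 * exp (2 * gam * Lk)))
        with (2 * exp (2 * T + 1) * Sv * (exp (- 2 * bt * Lk) * exp (2 * gam * Lk))) by ring.
      rewrite K1.
      assert (0 < 2 * exp (2 * T + 1) * Sv) by nra'.
      assert (2 * exp (2 * T + 1) * Sv * exp (- p * Lk) <= 2 * exp (2 * T + 1) * Sv * (4 * (E * G)))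
        by (apply Rmult_le_compat_l; lra).
      assert (0 < exp (2 * T + 1) * (Sv * (E * G))) by (apply Rmult_lt_0_compat; auto; apply Rmult_lt_0_compat; auto; apply Rmult_lt_0_compat; auto).
      nra'.
    +
      assert (HkB : - / eps < k).
      { assert (Rabs k < / eps) by (apply Rmult_lt_reg_r with eps; [lra|]; rewrite Rinv_l; lra).
        apply Rabs_lt_between in H. lra. }
      assert (HLk : Lk < - ln eps).
      { unfold Lk. rewrite <- ln_Rinv by lra. apply ln_increasing; auto.
        apply Rmult_lt_reg_r with eps; [lra|]. rewrite Rinv_l by lra. lra. }
      assert (F1 : fker nu eps tau k ^ 2 <= 25 * exp (2 * T) * (eps ^ 2 * tau ^ 2 * k ^ 6 * exp (- 2 * tau * k ^ 2)))
        by (apply fker_mid; auto; lra).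
      assert (F2 : eps ^ 2 * tau ^ 2 * k ^ 6 * exp (- 2 * tau * k ^ 2) <= exp 1 * (eps ^ 2 * k ^ 2 * (x ^ 2 * exp (- 2 * x)))).
      { assert (tau ^ 2 <= s ^ 2) by (unfold s; nra').
        assert (0 <= eps ^ 2 * k ^ 6) by (apply Rmult_le_pos; [apply pow2_ge_0|]; replace (k^6) with ((k^2)^3) by ring; apply pow_le; apply pow2_ge_0).
        assert (0 <= exp (- 2 * tau * k ^ 2)) by (left; apply exp_pos).
        replace (exp 1 * (eps ^ 2 * k ^ 2 * (x ^ 2 * exp (- 2 * x)))) with ((eps ^ 2 * k ^ 6) * s ^ 2 * (exp 1 * exp (- 2 * x))) by (unfold x; ring).
        replace (eps ^ 2 * tau ^ 2 * k ^ 6 * exp (- 2 * tau * k ^ 2)) with ((eps ^ 2 * k ^ 6) * tau ^ 2 * exp (- 2 * tau * k ^ 2)) by ring.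
        apply Rmult_le_compat; auto. apply Rmult_le_pos; auto. apply pow2_ge_0.
        apply Rmult_le_compat_l; auto. }
      assert (F3 : x ^ 2 * exp (- 2 * x) <= 2 * (Sv * exp (- 2 * bt * Lk))) by (rewrite <- HSx; apply decay2; auto; lra).
      assert (F4 : eps ^ 2 * k ^ 2 * exp (- 2 * bt * Lk) <= exp (2 * bt * ln eps)).
      { assert (eps ^ 2 = exp (2 * ln eps)) by (rewrite <- exp_sq, exp_ln; auto; lra).
        rewrite H, Hk2, <- !exp_plus. apply exp_le. nra'. }
      assert (W1 : exp (2 * gam * Lk) + 1 <= 2 * exp (- 2 * gam * ln eps)).
      { assert (exp (2 * gam * Lk) <= exp (- 2 * gam * ln eps)) by (apply exp_le; nra').
        assert (exp 0 <= exp (- 2 * gam * ln eps)) by (apply exp_le; nra'). rewrite exp_0 in H0. lra. }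
      assert (K1 : exp (2 * bt * ln eps) * exp (- 2 * gam * ln eps) = E) by (unfold E, p; rewrite <- exp_plus; f_equal; ring).
      assert (K2 : 1 <= 4 * G).
      { unfold G. rewrite <- exp_2ln2, <- exp_plus. apply Rle_trans with (exp 0); [rewrite exp_0; lra| apply exp_le].
        assert (0 <= ln (1 + eps * Rabs k)) by (rewrite <- ln_1; apply ln_le; nra').
        assert (ln (1 + eps * Rabs k) <= ln 2) by (apply ln_le; nra').
        pose proof ln2_pos. nra'. }
      assert (0 <= eps ^ 2 * k ^ 2) by (apply Rmult_le_pos; apply pow2_ge_0).
      assert (F5 : fker nu eps tau k ^ 2 <= 50 * exp (2 * T + 1) * Sv * exp (2 * bt * ln eps)).
      { eapply Rle_trans. apply F1. rewrite Hex.
        assert (X1 : eps ^ 2 * k ^ 2 * (x ^ 2 * exp (- 2 * x)) <= 2 * Sv * exp (2 * bt * ln eps)).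
        { assert (eps ^ 2 * k ^ 2 * (x ^ 2 * exp (- 2 * x)) <= eps ^ 2 * k ^ 2 * (2 * (Sv * exp (- 2 * bt * Lk))))
            by (apply Rmult_le_compat_l; auto).
          assert (2 * Sv * (eps ^ 2 * k ^ 2 * exp (- 2 * bt * Lk)) <= 2 * Sv * exp (2 * bt * ln eps))
            by (apply Rmult_le_compat_l; lra).
          nra'. }
        assert (X2 : exp 1 * (eps ^ 2 * k ^ 2 * (x ^ 2 * exp (- 2 * x))) <= exp 1 * (2 * Sv * exp (2 * bt * ln eps)))
          by (apply Rmult_le_compat_l; lra).
        assert (X3 : 25 * exp (2 * T) * (eps ^ 2 * tau ^ 2 * k ^ 6 * exp (- 2 * tau * k ^ 2)) <=
           25 * exp (2 * T) * (exp 1 * (2 * Sv * exp (2 * bt * ln eps)))).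
        { apply Rmult_le_compat_l; [lra|]. lra. }
        lra. }
      assert (0 < exp (2 * bt * ln eps)) by apply exp_pos.
      assert (0 < exp (- 2 * gam * ln eps)) by apply exp_pos.
      assert (0 < exp (2 * T + 1)) by apply exp_pos.
      eapply Rle_trans. apply Rmult_le_compat; [apply pow2_ge_0|lra|apply F5|apply W1].
      replace (50 * exp (2 * T + 1) * Sv * exp (2 * bt * ln eps) * (2 * exp (- 2 * gam * ln eps)))
        with (100 * exp (2 * T + 1) * Sv * (exp (2 * bt * ln eps) * exp (- 2 * gam * ln eps))) by ring.
      rewrite K1.
      assert (0 < exp (2 * T + 1) * Sv * E) by (apply Rmult_lt_0_compat; auto; apply Rmult_lt_0_compat; auto).
      nra'.
Qed.

Definition gk (eps p k : R) := exp (- p * ln (1 + eps * Rabs k)).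

Lemma exp_pow_div u a : 0 < u -> exp ((1 - a) * ln u) / u = exp (- a * ln u).
Proof.
  intros Hu. replace ((1 - a) * ln u) with (- a * ln u + ln u) by ring.
  rewrite exp_plus, exp_ln by auto. field. lra.
Qed.

Lemma g_right eps p M : 0 < eps -> 1 < p -> 0 < M ->
  is_RInt (fun k => exp (- p * ln (1 + eps * k))) 0 M
   ((- exp ((1 - p) * ln (1 + eps * M)) / (eps * (p - 1))) - (- exp ((1 - p) * ln (1 + eps * 0)) / (eps * (p - 1)))).
Proof.
  intros He Hp HM.
  apply (is_RInt_derive (V := R_CompleteNormedModule) (fun k => - exp ((1 - p) * ln (1 + eps * k)) / (eps * (p - 1)))).
  - intros x Hx. rewrite Rmin_left, Rmax_right in Hx by lra.
    assert (Hu : 0 < 1 + eps * x) by nra.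
    auto_derive. lra.
    rewrite <- (exp_pow_div (1 + eps * x) p Hu). field. repeat split; lra.
  - intros x Hx. rewrite Rmin_left, Rmax_right in Hx by lra.
    apply (@ex_derive_continuous R_AbsRing R_NormedModule). auto_derive. nra.
Qed.

Lemma g_left eps p M : 0 < eps -> 1 < p -> 0 < M ->
  is_RInt (fun k => exp (- p * ln (1 - eps * k))) (- M) 0
   ((exp ((1 - p) * ln (1 - eps * 0)) / (eps * (p - 1))) - (exp ((1 - p) * ln (1 - eps * (- M))) / (eps * (p - 1)))).
Proof.
  intros He Hp HM.
  apply (is_RInt_derive (V := R_CompleteNormedModule) (fun k => exp ((1 - p) * ln (1 - eps * k)) / (eps * (p - 1)))).
  - intros x Hx. rewrite Rmin_left, Rmax_right in Hx by lra.
    assert (Hu : 0 < 1 - eps * x) by nra.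
    auto_derive. lra.
    rewrite <- (exp_pow_div (1 - eps * x) p Hu). replace (1 + - (eps * x)) with (1 - eps * x) by ring. field. repeat split; lra.
  - intros x Hx. rewrite Rmin_left, Rmax_right in Hx by lra.
    apply (@ex_derive_continuous R_AbsRing R_NormedModule). auto_derive. nra.
Qed.

Lemma g_int eps p M : 0 < eps -> 1 < p -> 0 < M ->
  ex_RInt (gk eps p) (- M) M /\ RInt (gk eps p) (- M) M <= 2 / (eps * (p - 1)).
Proof.
  intros He Hp HM.
  pose proof (g_right eps p M He Hp HM) as HR.
  pose proof (g_left eps p M He Hp HM) as HL.
  assert (ER : ex_RInt (gk eps p) 0 M).
  { apply (ex_RInt_ext (fun k => exp (- p * ln (1 + eps * k)))).
    - intros x Hx. rewrite Rmin_left, Rmax_right in Hx by lra. unfold gk. rewrite Rabs_pos_eq; lra.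
    - eexists; eauto. }
  assert (EL : ex_RInt (gk eps p) (- M) 0).
  { apply (ex_RInt_ext (fun k => exp (- p * ln (1 - eps * k)))).
    - intros x Hx. rewrite Rmin_left, Rmax_right in Hx by lra. unfold gk. rewrite Rabs_left by lra.
      f_equal. f_equal. f_equal. ring.
    - eexists; eauto. }
  split. { eapply ex_RInt_Chasles; eauto. }
  rewrite <- (RInt_Chasles (V := R_CompleteNormedModule) _ _ 0 _ EL ER).
  assert (IR : RInt (gk eps p) 0 M = (- exp ((1 - p) * ln (1 + eps * M)) / (eps * (p - 1))) - (- exp ((1 - p) * ln (1 + eps * 0)) / (eps * (p - 1)))).
  { rewrite <- (is_RInt_unique _ _ _ _ HR). apply RInt_ext.
    intros x Hx. rewrite Rmin_left, Rmax_right in Hx by lra. unfold gk. rewrite Rabs_pos_eq; lra. }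
  assert (IL : RInt (gk eps p) (- M) 0 = (exp ((1 - p) * ln (1 - eps * 0)) / (eps * (p - 1))) - (exp ((1 - p) * ln (1 - eps * (- M))) / (eps * (p - 1)))).
  { rewrite <- (is_RInt_unique _ _ _ _ HL). apply RInt_ext.
    intros x Hx. rewrite Rmin_left, Rmax_right in Hx by lra. unfold gk. rewrite Rabs_left by lra.
    f_equal. f_equal. f_equal. ring. }
  change (plus (RInt (gk eps p) (- M) 0) (RInt (gk eps p) 0 M)) with (RInt (gk eps p) (- M) 0 + RInt (gk eps p) 0 M).
  rewrite IR, IL.
  replace (1 + eps * 0) with 1 by ring. replace (1 - eps * 0) with 1 by ring. rewrite ln_1, Rmult_0_r, exp_0.
  assert (0 < eps * (p - 1)) by nra.
  pose proof (exp_pos ((1 - p) * ln (1 + eps * M))). pose proof (exp_pos ((1 - p) * ln (1 - eps * - M))).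
  unfold Rdiv. rewrite <- !Ropp_mult_distr_l.
  assert (0 < / (eps * (p - 1))) by (apply Rinv_0_lt_compat; auto).
  nra.
Qed.

Lemma s_int bt d T : 0 < bt < 1 -> 0 < d <= 1 -> 0 < T ->
  ex_RInt (fun t => exp (- bt * ln (t + d))) 0 T /\
  RInt (fun t => exp (- bt * ln (t + d))) 0 T <= (T + 2) / (1 - bt).
Proof.
  intros Hb Hd HT.
  assert (H : is_RInt (fun t => exp (- bt * ln (t + d))) 0 T
    (exp ((1 - bt) * ln (T + d)) / (1 - bt) - exp ((1 - bt) * ln (0 + d)) / (1 - bt))).
  { apply (is_RInt_derive (V := R_CompleteNormedModule) (fun t => exp ((1 - bt) * ln (t + d)) / (1 - bt))).
    - intros x Hx. rewrite Rmin_left, Rmax_right in Hx by lra.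
      assert (Hu : 0 < x + d) by lra.
      auto_derive. lra.
      rewrite <- (exp_pow_div (x + d) bt Hu). field. lra.
    - intros x Hx. rewrite Rmin_left, Rmax_right in Hx by lra.
      apply (@ex_derive_continuous R_AbsRing R_NormedModule). auto_derive. lra. }
  split. { eexists; eauto. }
  rewrite (is_RInt_unique _ _ _ _ H).
  pose proof (pow_exp_le (T + d) (1 - bt) ltac:(lra) ltac:(lra)).
  pose proof (exp_pos ((1 - bt) * ln (0 + d))).
  assert (0 < / (1 - bt)) by (apply Rinv_0_lt_compat; lra).
  unfold Rdiv. nra.
Qed.

Theorem mainTheorem13 (nu : R) (Hnu : Rabs nu <= 1)
  (T kappa : R) (HT : 0 < T) (Hkappa : 0 < kappa) :
  exists eps0 gam0 C : R, 0 < eps0 /\ 0 < gam0 /\ 0 < C /\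
    forall gam eps : R, 0 < gam < gam0 -> 0 < eps < eps0 ->
    forall M : R, 0 < M ->
      (forall tau, 0 <= tau <= T ->
         inhabited (Riemann_integrable (integrand nu eps gam tau) (- M) M)) /\
      inhabited (Riemann_integrable
         (fun tau => RI (integrand nu eps gam tau) (- M) M) 0 T) /\
      RI (fun tau => RI (integrand nu eps gam tau) (- M) M) 0 T
        <= C * Rpower eps (1 - kappa).
Proof.
  set (kp := Rmin kappa 1).
  assert (Hkp : 0 < kp <= 1) by (unfold kp; split; [apply Rmin_pos; lra | apply Rmin_r]).
  assert (Hkpk : kp <= kappa) by apply Rmin_l.
  set (bt := 1 - kp / 4).
  set (K := 400 * exp (2 * T + 1)).
  assert (HK : 0 < K) by (unfold K; pose proof (exp_pos (2 * T + 1)); lra).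
  exists 1, (kp / 8), (K * 8 * (T + 2) / (1 - bt)).
  assert (Hbt : 3/4 <= bt < 1) by (unfold bt; lra).
  split; [lra|]. split; [lra|]. split.
  { apply Rdiv_lt_0_compat; [|lra]. nra. }
  intros gam eps Hg He M HM.
  assert (Hex := fun s => integrand_ex nu eps gam s M ltac:(lra) ltac:(lra) HM).
  split.
  { intros tau _. constructor. apply ex_RInt_Reals_0. apply Hex. }
  assert (Hf : (fun tau => RI (integrand nu eps gam tau) (- M) M) = (fun tau => RInt (integrand nu eps gam tau) (- M) M)).
  { apply functional_extensionality. intros t. apply RI_RInt. apply Hex. }
  rewrite Hf.
  assert (Hout : ex_RInt (fun tau => RInt (integrand nu eps gam tau) (- M) M) 0 T).
  { apply (@ex_RInt_continuous R_CompleteNormedModule). intros z _. apply I_cont; lra. }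
  split.
  { constructor. now apply ex_RInt_Reals_0. }
  rewrite RI_RInt by auto.
  set (p := 2 * bt - 2 * gam).
  assert (Hp : 5/4 <= p <= 2) by (unfold p, bt in *; lra).
  set (d := / (2 * M ^ 2 + 1)).
  assert (Hd : 0 < d <= 1).
  { unfold d. assert (0 <= M ^ 2) by apply pow2_ge_0. split. apply Rinv_0_lt_compat; lra.
    rewrite <- Rinv_1. apply Rinv_le_contravar; lra. }
  assert (Hdk : forall k, - M < k < M -> 2 * d * k ^ 2 <= 1).
  { intros k Hk. unfold d. assert (k ^ 2 <= M ^ 2) by (rewrite <- (pow2_abs k); apply pow_incr; split; [apply Rabs_pos| apply Rabs_le; lra]).
    assert (0 <= M ^ 2) by apply pow2_ge_0.
    apply Rmult_le_reg_r with (2 * M ^ 2 + 1); [lra|].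
    replace (2 * / (2 * M ^ 2 + 1) * k ^ 2 * (2 * M ^ 2 + 1)) with (2 * k ^ 2) by (field; lra). lra. }
  set (E := exp (p * ln eps)).
  assert (HE : 0 < E) by apply exp_pos.
  destruct (g_int eps p M ltac:(lra) ltac:(lra) HM) as [Gex Gb].
  destruct (s_int bt d T ltac:(lra) Hd HT) as [Sex Sb].
  set (D := K * E * (2 / (eps * (p - 1)))).
  assert (Inner : forall tau, 0 <= tau <= T -> RInt (integrand nu eps gam tau) (- M) M <= D * exp (- bt * ln (tau + d))).
  { intros tau Ht.
    set (Sv := exp (- bt * ln (tau + d))).
    assert (HSv : 0 < Sv) by apply exp_pos.
    apply Rle_trans with (RInt (fun k => (K * Sv * E) * gk eps p k) (- M) M).
    - apply RInt_le; [lra| apply Hex| |].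
      + apply (ex_RInt_scal (V := R_NormedModule) (gk eps p) (- M) M (K * Sv * E)). auto.
      + intros k Hk. eapply Rle_trans. apply (pointwise nu eps gam bt T tau d k); auto; try lra.
        right. unfold K, Sv, E, gk, p. ring.
    - assert (EQ : RInt (fun k => (K * Sv * E) * gk eps p k) (- M) M = (K * Sv * E) * RInt (gk eps p) (- M) M)
        by exact (RInt_scal (V := R_CompleteNormedModule) (gk eps p) (- M) M (K * Sv * E) Gex).
      rewrite EQ.
      unfold D. assert (0 < K * Sv * E) by (apply Rmult_lt_0_compat; auto; apply Rmult_lt_0_compat; auto).
      apply Rle_trans with ((K * Sv * E) * (2 / (eps * (p - 1)))). apply Rmult_le_compat_l; lra.
      right; ring. }
  assert (HD : 0 <= D).
  { unfold D. apply Rmult_le_pos. apply Rmult_le_pos; lra. apply Rlt_le, Rdiv_lt_0_compat; [lra|]. nra. }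
  apply Rle_trans with (RInt (fun t => D * exp (- bt * ln (t + d))) 0 T).
  { apply RInt_le; [lra|auto| |].
    - apply (ex_RInt_scal (V := R_NormedModule) _ 0 T D). auto.
    - intros t Ht. apply Inner. lra. }
  assert (EQ : RInt (fun t => D * exp (- bt * ln (t + d))) 0 T = D * RInt (fun t => exp (- bt * ln (t + d))) 0 T)
    by exact (RInt_scal (V := R_CompleteNormedModule) (fun t => exp (- bt * ln (t + d))) 0 T D Sex).
  rewrite EQ.
  apply Rle_trans with (D * ((T + 2) / (1 - bt))). { apply Rmult_le_compat_l; auto. }
  assert (Hle : ln eps < 0) by (rewrite <- ln_1; apply ln_increasing; lra).
  assert (HEe : E / eps <= Rpower eps (1 - kappa)).
  { unfold E, Rpower. rewrite <- (exp_ln eps) at 2 by lra. unfold Rdiv. rewrite <- exp_Ropp, <- exp_plus.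
    apply exp_le. unfold p, bt in *. nra. }
  assert (Hp1 : 2 / (eps * (p - 1)) <= 8 * / eps).
  { unfold Rdiv. rewrite Rinv_mult. assert (/ (p - 1) <= 4).
    { replace 4 with (/ / 4) by (field). apply Rinv_le_contravar; lra. }
    assert (0 < / eps) by (apply Rinv_0_lt_compat; lra). nra. }
  assert (HD2 : D <= K * 8 * Rpower eps (1 - kappa)).
  { unfold D. apply Rle_trans with (K * E * (8 * / eps)).
    - apply Rmult_le_compat_l; [nra|auto].
    - replace (K * E * (8 * / eps)) with (K * 8 * (E / eps)) by (unfold Rdiv; ring).
      apply Rmult_le_compat_l; [lra|auto]. }
  assert (0 < (T + 2) / (1 - bt)) by (apply Rdiv_lt_0_compat; lra).
  apply Rle_trans with (K * 8 * Rpower eps (1 - kappa) * ((T + 2) / (1 - bt))).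
  { apply Rmult_le_compat_r; lra. }
  right. unfold Rdiv. ring.
Qed.
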